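(* Consider the 2-node network game with market maker payoff $\pi^M=W_{con}$. Suppose $a_1=a_2=a>0$, $c_1=c_2=c>0$, $b_1,b_2>0$ with $1<b_1/b_2\le 3$, and the line capacity $f_{12}$ satisfies $$\frac{a}{3b_1+2c}<f_{12}<\min\Big\{\frac{a}{b_2+2c},\ \frac{a}{b_1},\ f_0\Big\},$$ where $$f_0=\frac{ab_2\big[b_1+b_2+c(3-b_1/b_2)\big]}{b_1b_2(b_1+b_2)+b_1(b_1+5b_2)c+2(b_1+b_2)c^2}.$$ Then the game has no GNE.
   Context: 2-node network game. There are generators $G_1,G_2$. Generator $k$ chooses $q_k\ge 0$ and has profit $\pi^G_k=q_kp_k(q_k+r_k)-c_kq_k^2$, where $p_k(d)=a_k-b_kd$. The market maker chooses $r\in\mathbb{R}$ and sets $r_1=r$, $r_2=-r$, subject to $-q_1\le r\le q_2$ and $-f_{12}\le r\le f_{12}$. Node $k$ receives $q_k+r_k$. Consumer surplus objective. The market maker maximizes $$W_{con}(q,r)=\sum_{k=1}^2\Big(\int_0^{q_k+r_k}p_k(w)\,dw-(q_k+r_k)p_k(q_k+r_k)\Big).$$ GNE. A triple $(q_1^*,q_2^*,r^* )$ with $r^*$ feasible given $q^*$ is a GNE if both of the following hold: - each $q_k^*$ maximizes $\pi^G_k$ over $q_k\ge0$, given the other generator's quantity and $r^*$; - $r^*$ maximizes $W_{con}(q^*,\cdot)$ over the feasible set determined by $q^*$. *)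

(* Defs.v *)
From Stdlib Require Import Reals Lra.
Open Scope R_scope.

Definition price (a b d : R) : R := a - b * d.

Definition gen_profit (a b c q r : R) : R :=
  q * price a b (q + r) - c * q ^ 2.

(* Consumer surplus at one node with consumption d:
   int_0^d p(w) dw - d p(d), where int_0^d (a - b w) dw = a d - b d^2/2. *)
Definition node_cs (a b d : R) : R :=
  (a * d - b * d ^ 2 / 2) - d * price a b d.

(* W_con(q, r) with r_1 = r, r_2 = -r. *)
Definition W_con (a1 b1 a2 b2 q1 q2 r : R) : R :=
  node_cs a1 b1 (q1 + r) + node_cs a2 b2 (q2 - r).

Definition mm_feasible (f12 q1 q2 r : R) : Prop :=
  - q1 <= r /\ r <= q2 /\ - f12 <= r /\ r <= f12.

Definition is_GNE (a1 b1 c1 a2 b2 c2 f12 q1 q2 r : R) : Prop :=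
  0 <= q1 /\ 0 <= q2 /\ mm_feasible f12 q1 q2 r /\
  (forall q1', 0 <= q1' -> gen_profit a1 b1 c1 q1' r <= gen_profit a1 b1 c1 q1 r) /\
  (forall q2', 0 <= q2' -> gen_profit a2 b2 c2 q2' (- r) <= gen_profit a2 b2 c2 q2 (- r)) /\
  (forall r', mm_feasible f12 q1 q2 r' ->
     W_con a1 b1 a2 b2 q1 q2 r' <= W_con a1 b1 a2 b2 q1 q2 r).

Definition f0 (a b1 b2 c : R) : R :=
  a * b2 * (b1 + b2 + c * (3 - b1 / b2)) /
  (b1 * b2 * (b1 + b2) + b1 * (b1 + 5 * b2) * c + 2 * (b1 + b2) * c ^ 2).

(* Main.v *)
Require Import Defs.
From Stdlib Require Import Reals.
From Stdlib Require Import Lra Psatz.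
Open Scope R_scope.

Lemma W_eq a b1 b2 q1 q2 r :
  W_con a b1 a b2 q1 q2 r = b1 * (q1 + r)^2 / 2 + b2 * (q2 - r)^2 / 2.
Proof. unfold W_con, node_cs, price. field. Qed.

Lemma gen_opt (a b c q r : R) : 0 < b -> 0 < c -> 0 <= q ->
  (forall q', 0 <= q' -> gen_profit a b c q' r <= gen_profit a b c q r) ->
  0 <= a - b * r -> 2 * (b + c) * q = a - b * r.
Proof.
  intros Hb Hc Hq H Hm.
  set (qs := (a - b * r) / (2 * (b + c))).
  assert (Hqs : 2 * (b + c) * qs = a - b * r) by (unfold qs; field; lra).
  assert (Hqs0 : 0 <= qs).
  { unfold qs. apply Rmult_le_pos; [lra|]. apply Rlt_le, Rinv_0_lt_compat; lra. }
  specialize (H qs Hqs0). unfold gen_profit, price in H.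
  assert (Ha : a = 2 * (b + c) * qs + b * r) by lra.
  rewrite Ha in H.
  assert (Hid : (b + c) * ((qs - q) * (qs - q)) <= 0) by nra.
  assert (Hsq : (qs - q) * (qs - q) <= 0).
  { apply (Rmult_le_reg_l (b + c)); lra. }
  assert (qs = q) by nra. rewrite <- H0. lra.
Qed.

Lemma div_lt_l x y z : 0 < y -> x / y < z -> x < z * y.
Proof.
  intros Hy H. apply (Rmult_lt_compat_r y) in H; auto.
  replace (x / y * y) with x in H by (field; lra). exact H.
Qed.

Lemma div_lt_r x y z : 0 < y -> z < x / y -> z * y < x.
Proof.
  intros Hy H. apply (Rmult_lt_compat_r y) in H; auto.
  replace (x / y * y) with x in H by (field; lra). exact H.
Qed.

Theorem lemma1 (a c b1 b2 f12 : R) :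
  0 < a -> 0 < c -> 0 < b1 -> 0 < b2 ->
  1 < b1 / b2 -> b1 / b2 <= 3 ->
  a / (3 * b1 + 2 * c) < f12 ->
  f12 < a / (b2 + 2 * c) -> f12 < a / b1 -> f12 < f0 a b1 b2 c ->
  ~ (exists q1 q2 r, is_GNE a b1 c a b2 c f12 q1 q2 r).
Proof.
  intros Ha Hc Hb1 Hb2 Hr1 Hr3 Hf1 Hf2 Hf3 Hf0
    [q1 [q2 [r [Hq1 [Hq2 [[F1 [F2 [F3 F4]]] [G1 [G2 W]]]]]]]].
  set (f := f12) in *. clearbody f.
  assert (Hbb : b2 < b1).
  { apply div_lt_r in Hr1; lra. }
  assert (L1 : a < f * (3 * b1 + 2 * c)) by (apply div_lt_l; lra).
  assert (L2 : f * (b2 + 2 * c) < a) by (apply div_lt_r; lra).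
  assert (L3 : f * b1 < a) by (apply div_lt_r; lra).
  set (D := b1 * b2 * (b1 + b2) + b1 * (b1 + 5 * b2) * c + 2 * (b1 + b2) * c ^ 2).
  assert (HD : 0 < D).
  { unfold D. assert (0 < b1 * b2) by nra. assert (0 < b1 + b2) by lra.
    assert (0 < b1*b2*(b1+b2)) by nra. assert (0 < b1 * (b1 + 5*b2)) by nra.
    assert (0 < b1 * (b1 + 5*b2) * c) by nra. assert (0 < c^2) by nra. nra. }
  assert (L0 : f * D < a * (b1 * b2 + b2 ^ 2 + 3 * b2 * c - b1 * c)).
  { unfold f0 in Hf0. fold D in Hf0. apply div_lt_r in Hf0; auto.
    replace (a * (b1 * b2 + b2 ^ 2 + 3 * b2 * c - b1 * c))
      with (a * b2 * (b1 + b2 + c * (3 - b1 / b2))) by (field; lra). exact Hf0. }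
  assert (Hfpos : 0 < f).
  { apply Rlt_trans with (a / (3 * b1 + 2 * c)); auto.
    apply Rdiv_lt_0_compat; lra. }
  assert (E1 : 2 * (b1 + c) * q1 = a - b1 * r).
  { apply gen_opt; auto. nra. }
  assert (E2 : 2 * (b2 + c) * q2 = a - b2 * - r).
  { apply gen_opt; auto. nra. }
  destruct (Req_dec r q2) as [Rq2|Rq2].
  { subst r. nra. }
  destruct (Req_dec r f) as [Rf|Rf].
  { subst r.
    assert (Hq1f : q1 <= f) by nra.
    pose proof (W (- q1) ltac:(repeat split; lra)) as Hw.
    rewrite !W_eq in Hw.
    assert (Hx : 2 * (b1 + c) * (q1 + f) = a + (b1 + 2 * c) * f) by lra.
    assert (Hy : 2 * (b2 + c) * (q2 - f) = a - (b2 + 2 * c) * f) by lra.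
    assert (Hid : 2 * (b1 + c) * (b2 + c) * (2 * b2 * (q2 - f) - (b1 - b2) * (q1 + f))
                  = a * (b1 * b2 + b2 ^ 2 + 3 * b2 * c - b1 * c) - f * D).
    { transitivity (2 * b2 * (b1 + c) * (2 * (b2 + c) * (q2 - f))
                    - (b1 - b2) * (b2 + c) * (2 * (b1 + c) * (q1 + f))); [ring|].
      rewrite Hx, Hy. unfold D. ring. }
    assert (HK : 0 < 2 * b2 * (q2 - f) - (b1 - b2) * (q1 + f)).
    { assert (Hp : 0 < 2 * (b1 + c) * (b2 + c)) by nra.
      apply (Rmult_lt_reg_l (2 * (b1 + c) * (b2 + c))); auto. rewrite Hid. lra. }
    assert (HP : 0 < (q1 + f) * (2 * b2 * (q2 - f) - (b1 - b2) * (q1 + f))).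
    { apply Rmult_lt_0_compat; lra. }
    assert (Hid2 : b2 * (q2 - - q1)^2/2 - (b1 * (q1 + f)^2/2 + b2 * (q2 - f)^2/2)
                   = (q1 + f) * (2 * b2 * (q2 - f) - (b1 - b2) * (q1 + f)) / 2) by field.
    replace (b1 * (q1 + - q1) ^ 2 / 2) with 0 in Hw by field.
    lra. }
  destruct (Req_dec r (- q1)) as [Rq1|Rq1].
  { subst r.
    assert (Ha1 : (b1 + 2 * c) * q1 = a) by lra.
    assert (Hq1p : 0 < q1) by nra.
    destruct (Rle_lt_dec q2 f) as [H2|H2].
    { pose proof (W q2 ltac:(repeat split; lra)) as Hw.
      rewrite !W_eq in Hw.
      assert (Hid : b1 * (q1 + q2)^2/2 + b2*(q2-q2)^2/2
                    - (b1 * (q1 + - q1)^2/2 + b2 * (q2 - - q1)^2/2)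
                    = (b1 - b2) * ((q1 + q2) * (q1 + q2)) / 2) by field.
      assert (0 < (b1 - b2) * ((q1 + q2) * (q1 + q2))).
      { apply Rmult_lt_0_compat; [lra|]. apply Rmult_lt_0_compat; lra. }
      lra. }
    { pose proof (W f ltac:(repeat split; lra)) as Hw.
      rewrite !W_eq in Hw.
      assert (Hcmp : b2 * q2 < b1 * q1).
      { assert (Hp : 0 < (b2 + c) * (b1 + 2 * c)) by nra.
        apply (Rmult_lt_reg_l (2 * ((b2 + c) * (b1 + 2 * c)))); [lra|].
        replace (2 * ((b2 + c) * (b1 + 2 * c)) * (b2 * q2))
          with (b2 * (b1 + 2 * c) * (2 * (b2 + c) * q2)) by field.
        replace (2 * ((b2 + c) * (b1 + 2 * c)) * (b1 * q1))
          with (2 * b1 * (b2 + c) * ((b1 + 2 * c) * q1)) by field.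
        rewrite E2, Ha1.
        replace (b2 * (b1 + 2 * c) * (a - b2 * - - q1))
          with (b2 * b1 * a + 2 * b2 * c * a - b2 * b2 * ((b1 + 2*c) * q1)) by field.
        rewrite Ha1.
        assert (0 < b1*b2 + 2*c*(b1-b2) + b2*b2) by nra.
        assert (0 < a*(b1*b2 + 2*c*(b1-b2) + b2*b2)) by (apply Rmult_lt_0_compat; lra).
        lra. }
      assert (HK : 0 < (b1 + b2) * (f + q1) - 2 * b2 * (q2 + q1)) by nra.
      assert (HP : 0 < (f + q1) * ((b1 + b2) * (f + q1) - 2 * b2 * (q2 + q1)))
        by (apply Rmult_lt_0_compat; lra).
      assert (Hid : b1 * (q1 + f)^2/2 + b2*(q2-f)^2/2
                    - (b1 * (q1 + - q1)^2/2 + b2 * (q2 - - q1)^2/2)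
                    = (f + q1) * ((b1 + b2) * (f + q1) - 2 * b2 * (q2 + q1)) / 2) by field.
      lra. } }
  destruct (Req_dec r (- f)) as [Rmf|Rmf].
  { subst r.
    assert (Hq1f : f <= q1) by lra.
    destruct (Rle_lt_dec q2 f) as [H2|H2].
    { pose proof (W q2 ltac:(repeat split; lra)) as Hw.
      rewrite !W_eq in Hw.
      assert (HP : 0 < (q2 + f) * (2 * b1 * (q1 - f) + (b1 - b2) * (q2 + f))).
      { apply Rmult_lt_0_compat; [lra|]. nra. }
      assert (Hid : b1 * (q1 + q2)^2/2 + b2*(q2-q2)^2/2
                    - (b1 * (q1 + - f)^2/2 + b2 * (q2 - - f)^2/2)
                    = (q2 + f) * (2 * b1 * (q1 - f) + (b1 - b2) * (q2 + f)) / 2) by field.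
      lra. }
    { pose proof (W f ltac:(repeat split; lra)) as Hw.
      rewrite !W_eq in Hw.
      assert (Hcmp : b2 * q2 < b1 * q1).
      { assert (Hp : 0 < (b1 + c) * (b2 + c)) by nra.
        apply (Rmult_lt_reg_l (2 * ((b1 + c) * (b2 + c)))); [lra|].
        replace (2 * ((b1 + c) * (b2 + c)) * (b2 * q2))
          with (b2 * (b1 + c) * (2 * (b2 + c) * q2)) by field.
        replace (2 * ((b1 + c) * (b2 + c)) * (b1 * q1))
          with (b1 * (b2 + c) * (2 * (b1 + c) * q1)) by field.
        rewrite E1, E2.
        assert (0 < a*c*(b1-b2)) by (apply Rmult_lt_0_compat; [apply Rmult_lt_0_compat|]; lra).
        assert (0 < f*(b1*b1*(b2+c) + b2*b2*(b1+c))) by (apply Rmult_lt_0_compat; [lra|]; apply Rplus_lt_0_compat; repeat apply Rmult_lt_0_compat; lra).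
        nra. }
      assert (Hid : b1 * (q1 + f)^2/2 + b2*(q2-f)^2/2
                    - (b1 * (q1 + - f)^2/2 + b2 * (q2 - - f)^2/2)
                    = 2 * f * (b1 * q1 - b2 * q2)) by field.
      assert (0 < 2 * f * (b1 * q1 - b2 * q2)) by (apply Rmult_lt_0_compat; lra).
      lra. } }
  set (t := Rmin (Rmin (q2 - r) (f - r)) (Rmin (r + q1) (r + f))).
  assert (Ht1 : t <= q2 - r) by (unfold t; eapply Rle_trans; [apply Rmin_l|apply Rmin_l]).
  assert (Ht2 : t <= f - r) by (unfold t; eapply Rle_trans; [apply Rmin_l|apply Rmin_r]).
  assert (Ht3 : t <= r + q1) by (unfold t; eapply Rle_trans; [apply Rmin_r|apply Rmin_l]).
  assert (Ht4 : t <= r + f) by (unfold t; eapply Rle_trans; [apply Rmin_r|apply Rmin_r]).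
  assert (Ht : 0 < t).
  { unfold t. apply Rmin_glb_lt; apply Rmin_glb_lt; lra. }
  pose proof (W (r + t) ltac:(repeat split; lra)) as Hw1.
  pose proof (W (r - t) ltac:(repeat split; lra)) as Hw2.
  rewrite !W_eq in Hw1, Hw2.
  assert (Hid : b1 * (q1 + (r + t))^2/2 + b2 * (q2 - (r + t))^2/2
              + (b1 * (q1 + (r - t))^2/2 + b2 * (q2 - (r - t))^2/2)
              - 2 * (b1 * (q1 + r)^2/2 + b2 * (q2 - r)^2/2) = (b1 + b2) * (t * t)) by field.
  assert (0 < (b1 + b2) * (t * t)) by (apply Rmult_lt_0_compat; nra).
  lra.
Qed.
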